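(* Let $H\ge 1$ be an integer and let $n_0,n_1,\dots,n_H$ be positive integers with $n_0=d$ and $n_H=1$ (the layer widths of a fully-connected feed-forward network with $d$ inputs, depth $H$ and a single output). Define the mass $\Psi=\prod_{i=0}^{H} n_i$, the quantity $\Lambda=\sqrt[H]{\Psi}$, and the size $N=\sum_{i=0}^{H-1} n_i n_{i+1}$. Then \[ \Psi^2 H=\Lambda^{2H}H\;\ge\; N\;\ge\; \sqrt[H]{\Psi^2}\,\frac{H}{\sqrt[H]{d}}\;\ge\;\sqrt[H]{\Psi}=\Lambda . \]
   Context: The network has layers $0,1,\dots,H$, where layer $i$ has $n_i$ units, layer $0$ is the input layer and layer $H$ is the output layer; consecutive layers are fully connected, so $N$ is the total number of weights and $\Psi$ is the total number of input-to-output paths. *)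

(* Defs.v *)
From Stdlib Require Import Reals Lra Lia Arith.
Open Scope R_scope.

Fixpoint prod_upto (n : nat -> nat) (k : nat) : nat :=
  match k with
  | O => n O
  | S k' => (prod_upto n k' * n (S k'))%nat
  end.

Fixpoint sum_below (f : nat -> nat) (k : nat) : nat :=
  match k with
  | O => O
  | S k' => (sum_below f k' + f k')%nat
  end.

Definition mass (H : nat) (n : nat -> nat) : nat := prod_upto n H.

Definition net_size (H : nat) (n : nat -> nat) : nat :=
  sum_below (fun i => (n i * n (S i))%nat) H.

Definition hroot (H : nat) (x : R) : R := Rpower x (/ INR H).

(* Main.v *)
Require Import Defs.
From Stdlib Require Import Reals Lra Lia Arith.
Open Scope R_scope.

Fixpoint rsum (f : nat -> R) (k : nat) : R :=
  match k with O => 0 | S k' => rsum f k' + f k' end.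

Lemma exp_mono_le x y : x <= y -> exp x <= exp y.
Proof. intros [h|h]; [left; apply exp_increasing; auto | subst; lra]. Qed.

Lemma ln_le_sub1 y : 0 < y -> ln y <= y - 1.
Proof.
  intros hy. destruct (Rle_or_lt (ln y) (y - 1)) as [h|h]; auto.
  apply exp_increasing in h. rewrite exp_ln in h by auto.
  pose proof (exp_ineq1_le (y - 1)). lra.
Qed.

Lemma amgm_aux (f : nat -> R) (A : R) (k : nat) : 0 < A ->
  (forall i, (i < k)%nat -> 0 < f i) ->
  rsum (fun i => ln (f i)) k - INR k * ln A <= rsum f k / A - INR k.
Proof.
  intros hA. induction k as [|k IH]; intros hf; cbn [rsum].
  - simpl. unfold Rdiv. rewrite Rmult_0_l. lra.
  - rewrite S_INR. assert (IH' := IH (fun i hi => hf i (Nat.lt_lt_succ_r _ _ hi))).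
    assert (hfk : 0 < f k) by (apply hf; lia).
    pose proof (ln_le_sub1 (f k / A) ltac:(apply Rdiv_lt_0_compat; auto)).
    unfold Rdiv in *. rewrite ln_mult in H by (auto; apply Rinv_0_lt_compat; auto).
    rewrite ln_Rinv in H by auto. rewrite Rmult_plus_distr_r. lra.
Qed.

Lemma amgm (f : nat -> R) (k : nat) : (1 <= k)%nat ->
  (forall i, (i < k)%nat -> 0 < f i) ->
  rsum (fun i => ln (f i)) k <= INR k * ln (rsum f k / INR k).
Proof.
  intros hk hf.
  assert (hK : 0 < INR k) by (apply lt_0_INR; lia).
  assert (hpos : forall m, (m <= k)%nat -> (1 <= m)%nat -> 0 < rsum f m).
  { induction m as [|m IH]; intros hm h1; [lia|]. simpl.
    destruct m. simpl. pose proof (hf O ltac:(lia)). lra.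
    pose proof (IH ltac:(lia) ltac:(lia)). pose proof (hf (S m) ltac:(lia)). lra. }
  pose proof (hpos k (le_n _) hk) as hS.
  pose proof (amgm_aux f (rsum f k / INR k) k ltac:(apply Rdiv_lt_0_compat; auto) hf).
  replace (rsum f k / (rsum f k / INR k)) with (INR k) in H by (field; lra). lra.
Qed.

Lemma INR_sum_below g k : INR (sum_below g k) = rsum (fun i => INR (g i)) k.
Proof. induction k; simpl; auto. rewrite plus_INR, IHk; auto. Qed.

Lemma rsum_le_const (f : nat -> R) M k : (forall i, (i < k)%nat -> f i <= M) ->
  rsum f k <= INR k * M.
Proof.
  induction k; intros h; cbn [rsum]. simpl; lra. rewrite S_INR.
  pose proof (IHk (fun i hi => h i ltac:(lia))). pose proof (h k ltac:(lia)). lra.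
Qed.

Lemma rsum_ext_lt f g k : (forall i, (i < k)%nat -> f i = g i) -> rsum f k = rsum g k.
Proof. induction k; intros h; simpl; auto. rewrite IHk, h; auto; intros; apply h; lia. Qed.

Lemma rsum_pos f k : (forall i, (i < k)%nat -> 0 < f i) -> 0 <= rsum f k.
Proof. induction k; intros h; simpl. lra. pose proof (IHk (fun i hi => h i ltac:(lia))). pose proof (h k ltac:(lia)). lra. Qed.

Lemma rsum_spos f k : (1 <= k)%nat -> (forall i, (i < k)%nat -> 0 < f i) -> 0 < rsum f k.
Proof. destruct k; intros hk h; [lia|]. simpl. pose proof (rsum_pos f k (fun i hi => h i ltac:(lia))). pose proof (h k ltac:(lia)). lra. Qed.

Lemma rsum_plus f g k : rsum (fun i => f i + g i) k = rsum f k + rsum g k.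
Proof. induction k; simpl; [lra|]. rewrite IHk; lra. Qed.

Lemma rsum_shift f k : rsum (fun i => f (S i)) k = rsum f (S k) - f O.
Proof. induction k; simpl in *; [lra|]. rewrite IHk; lra. Qed.

Section Nat.
Variable H : nat. Variable n : nat -> nat.
Hypothesis hpos : forall i : nat, (i <= H)%nat -> (0 < n i)%nat.

Lemma prod_pos k : (k <= H)%nat -> (0 < prod_upto n k)%nat.
Proof.
  induction k; intros hk; simpl. apply hpos; lia.
  pose proof (IHk ltac:(lia)). pose proof (hpos (S k) hk). nia.
Qed.

Lemma n_le_prod i k : (i <= k)%nat -> (k <= H)%nat -> (n i <= prod_upto n k)%nat.
Proof.
  induction k; intros hik hk.
  - assert (i = O) by lia. subst. simpl. lia.
  - destruct (Nat.eq_dec i (S k)).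
    + subst. simpl. pose proof (prod_pos k ltac:(lia)). nia.
    + simpl. pose proof (IHk ltac:(lia) ltac:(lia)). pose proof (hpos (S k) hk). nia.
Qed.

Lemma prod_mono j k : (j <= k)%nat -> (k <= H)%nat -> (prod_upto n j <= prod_upto n k)%nat.
Proof.
  induction k; intros hjk hk.
  - assert (j = O) by lia. subst. lia.
  - destruct (Nat.eq_dec j (S k)). subst; lia.
    simpl. pose proof (IHk ltac:(lia) ltac:(lia)). pose proof (hpos (S k) hk). nia.
Qed.

Lemma ln_prod k : (k <= H)%nat ->
  ln (INR (prod_upto n k)) = rsum (fun i => ln (INR (n i))) (S k).
Proof.
  induction k; intros hk; simpl. lra.
  rewrite mult_INR, ln_mult. rewrite IHk by lia. simpl. lra.
  apply lt_0_INR, prod_pos; lia. apply lt_0_INR, hpos; lia.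
Qed.
End Nat.

Theorem theorem3p1 (H d : nat) (n : nat -> nat)
  (hH : (1 <= H)%nat)
  (hpos : forall i : nat, (i <= H)%nat -> (0 < n i)%nat)
  (h0 : n 0%nat = d) (hout : n H = 1%nat) :
  let Psi := INR (mass H n) in
  let Lam := hroot H Psi in
  let N := INR (net_size H n) in
  Psi ^ 2 * INR H = Lam ^ (2 * H) * INR H /\
  Lam ^ (2 * H) * INR H >= N /\
  N >= hroot H (Psi ^ 2) * (INR H / hroot H (INR d)) /\
  hroot H (Psi ^ 2) * (INR H / hroot H (INR d)) >= hroot H Psi /\
  hroot H Psi = Lam.
Proof.
  intros Psi Lam N.
  assert (hHr : 1 <= INR H) by (apply (le_INR 1); auto).
  assert (hPsi1 : 1 <= Psi).
  { apply (le_INR 1). apply prod_pos with H; auto. }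
  assert (hd : 1 <= INR d).
  { apply (le_INR 1). subst d. apply hpos; lia. }
  assert (hdPsi : INR d <= Psi).
  { apply le_INR. subst d. apply n_le_prod with H; auto; lia. }
  assert (hPsi : 0 < Psi) by lra.
  assert (hLam : Lam ^ (2 * H) = Psi ^ 2).
  { unfold Lam, hroot. rewrite <- Rpower_pow by (unfold Rpower; apply exp_pos).
    rewrite Rpower_mult. rewrite mult_INR.
    replace (/ INR H * (INR 2 * INR H)) with (INR 2) by (field; lra).
    apply Rpower_pow; auto. }
  set (u := ln Psi / INR H). set (v := ln (INR d) / INR H).
  assert (hr1 : hroot H Psi = exp u).
  { unfold hroot, Rpower, u. f_equal. unfold Rdiv; ring. }
  assert (hr2 : hroot H (Psi ^ 2) = exp u * exp u).
  { unfold hroot, Rpower, u. rewrite <- exp_plus. f_equal. rewrite ln_pow by auto.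
    simpl. unfold Rdiv. field. lra. }
  assert (hrd : hroot H (INR d) = exp v).
  { unfold hroot, Rpower, v. f_equal. unfold Rdiv; ring. }
  assert (hvu : v <= u).
  { unfold u, v, Rdiv. apply Rmult_le_compat_r. left; apply Rinv_0_lt_compat; lra.
    destruct hdPsi as [h|h]. left; apply ln_increasing; lra. rewrite h; lra. }
  assert (hu0 : 0 <= u).
  { unfold u, Rdiv. apply Rmult_le_pos. rewrite <- ln_1.
    destruct hPsi1 as [h|h]. left; apply ln_increasing; lra. rewrite h; lra.
    left; apply Rinv_0_lt_compat; lra. }
  pose proof (exp_pos u). pose proof (exp_pos v). pose proof (exp_mono_le _ _ hvu).
  assert (hN : N = rsum (fun i => INR (n i * n (S i))) H).
  { unfold N, net_size. apply INR_sum_below. }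
  split; [rewrite hLam; auto|]. split.
  { rewrite hLam. rewrite hN.
    assert (rsum (fun i => INR (n i * n (S i))) H <= INR H * Psi).
    { apply rsum_le_const. intros i hi. unfold Psi, mass. apply le_INR.
      apply Nat.le_trans with (prod_upto n (S i)).
      simpl. pose proof (n_le_prod H n hpos i i ltac:(lia) ltac:(lia)). nia.
      apply (prod_mono H n hpos); lia. }
    assert (0 <= INR H * Psi * (Psi - 1)) by (apply Rmult_le_pos; [apply Rmult_le_pos|]; lra). simpl. nra. }
  split.
  { rewrite hr2, hrd.
    assert (hterm : forall i, (i < H)%nat -> 0 < INR (n i * n (S i))).
    { intros i hi. apply lt_0_INR. pose proof (hpos i ltac:(lia)). pose proof (hpos (S i) ltac:(lia)). nia. }
    pose proof (amgm _ H hH hterm) as hA. rewrite <- hN in hA.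
    assert (hl : rsum (fun i => ln (INR (n i * n (S i)))) H = 2 * ln Psi - ln (INR d)).
    { rewrite (rsum_ext_lt _ (fun i => ln (INR (n i)) + ln (INR (n (S i))))).
      rewrite rsum_plus. rewrite (rsum_shift (fun i => ln (INR (n i)))).
      unfold Psi, mass. rewrite ln_prod with (H:=H) by auto. simpl. rewrite hout, h0. simpl INR. rewrite ln_1. lra.
      intros i hi. rewrite mult_INR, ln_mult. auto.
      apply lt_0_INR, hpos; lia. apply lt_0_INR, hpos; lia. }
    rewrite hl in hA.
    assert (hNH : 0 < N / INR H).
    { apply Rdiv_lt_0_compat; [|lra]. rewrite hN.
      apply rsum_spos; auto. }
    assert (h2 : 2 * u - v <= ln (N / INR H)).
    { unfold u, v. apply (Rmult_le_reg_l (INR H)). lra. replace (INR H * (2 * (ln Psi / INR H) - ln (INR d) / INR H)) with (2 * ln Psi - ln (INR d)) by (field; lra). lra. }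
    apply exp_mono_le in h2. rewrite exp_ln in h2 by auto.
    replace (2 * u - v) with (u + u + - v) in h2 by ring. rewrite exp_plus, exp_plus, exp_Ropp in h2.
    apply Rle_ge. replace (exp u * exp u * (INR H / exp v)) with (INR H * (exp u * exp u * / exp v)) by (field; lra).
    apply (Rmult_le_compat_l (INR H)) in h2; [|lra].
    replace (INR H * (N / INR H)) with N in h2 by (field; lra). lra. }
  split.
  { rewrite hr2, hr1, hrd.
    assert (exp u / exp v >= 1).
    { apply Rle_ge. apply (Rmult_le_reg_r (exp v)); auto. unfold Rdiv. rewrite Rmult_assoc, Rinv_l by lra. lra. }
    unfold Rdiv in *. replace (exp u * exp u * (INR H * / exp v)) with (exp u * (INR H * (exp u * / exp v))) by ring.
    apply Rle_ge. rewrite <- (Rmult_1_r (exp u)) at 1. apply Rmult_le_compat_l; [lra|]. rewrite <- (Rmult_1_r 1). apply Rmult_le_compat; lra. }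
  auto.
Qed.
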